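(* Let $k$ be a field of characteristic $0$, $K = k(x)$, and let $P, Q \in k[x]$ be separable polynomials of degree $\geq 1$ such that: (i) $P$ and $Q$ have no common roots; (ii) $P(0)\neq 0$ and $Q(0)\neq 0$; (iii) there is a root $x_1 \in k$ of $P$ with $x_1 Q(x_1) \in k^{\times 2}$ and a root $x_2 \in k$ of $Q$ with $x_2 P(x_2) \in k^{\times 2}$. Let $X$ be the smooth projective curve over $k$ with function field $L = K(\sqrt{xP(x)}, \sqrt{xQ(x)})$. Then $X$ admits a faithful action of $G = (\mathbb{Z}/2\mathbb{Z})^2 = \langle e_1, e_2\rangle$ by $k$-automorphisms (namely $e_1$ negates $\sqrt{xP(x)}$ and fixes $\sqrt{xQ(x)}$, $e_2$ fixes $\sqrt{xP(x)}$ and negates $\sqrt{xQ(x)}$, both fixing $x$) such that every element of $G$ fixes at least one geometric point of $X$.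
   Context: Characteristic of $k$ is $0$. A curve means a geometrically irreducible smooth projective $1$-dimensional $k$-variety; a geometric point is a point of $X(\overline{k})$. *)

(* Defs.v *)
From HB Require Import structures.
From mathcomp Require Import all_boot all_order all_algebra all_field.
Set Implicit Arguments. Unset Strict Implicit. Unset Printing Implicit Defensive.
Import GRing.Theory.
Local Open Scope ring_scope.

(* A place of the function field L/k (k embedded in L via iota): a valuation
   ring O of L containing iota(k), O <> L.  For a smooth projective curve X
   over k with function field L, the closed points of X are in bijection
   with such places. *)
Definition is_place (k L : fieldType) (iota : k -> L) (O : L -> Prop) : Prop :=
  [/\ (forall c : k, O (iota c)),
      (forall a b, O a -> O b -> O (a - b)),
      (forall a b, O a -> O b -> O (a * b)),
      (forall a : L, O a \/ O a^-1)
    & (exists a : L, ~ O a)].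

Definition place_max (L : fieldType) (O : L -> Prop) (a : L) : Prop :=
  O a /\ (a = 0 \/ ~ O a^-1).

(* The automorphism sigma of L fixes a geometric point (a point of X(kbar))
   lying over the place O: a geometric point is a pair (O, phi) with phi a
   k-embedding of the residue field of O into kbar, and sigma sends it to
   (sigma O, phi o sigma^-1); it is fixed iff sigma O = O and sigma acts
   trivially on the residue field of O. *)
Definition fixes_geometric_point (k L : fieldType) (iota : k -> L)
    (sigma : L -> L) : Prop :=
  exists O : L -> Prop,
    [/\ is_place iota O,
        (forall a, O (sigma a) <-> O a)
      & (forall a, O a -> place_max O (sigma a - a))].

(* Main.v *)
Require Import Defs.
From HB Require Import structures.
From mathcomp Require Import all_boot all_order all_algebra all_field.
From mathcomp Require Import ring zify.
From Stdlib Require Import Classical ClassicalEpsilon.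
Import GRing.Theory.
Local Open Scope ring_scope.

Module PA.

Lemma sq_key (K : fieldType) (r : K) (R X Y : {poly K}) :
  R.[r] != 0 -> X ^+ 2 = ('X - r%:P) * R * Y ^+ 2 -> X = 0 /\ Y = 0.
Proof.
move=> HR.
elim: {Y}(size Y).+1 {-2}Y (ltnSn (size Y)) X => // n IH Y HY X E.
have Xr0 : ('X - r%:P) != 0 :> {poly K} by rewrite polyXsubC_eq0.
have [Y0|Y0] := eqVneq Y 0.
  have Z : (0 : {poly K}) ^+ 2 = 0 by rewrite expr2 mulr0.
  move: E; rewrite Y0 Z mulr0 => /eqP H; split => //; apply/eqP; move: H; rewrite sqrf_eq0.  done.
exfalso.
have /factor_theorem [X1 EX] : root X r.
  have := congr1 (fun p => p.[r]) E.
  rewrite /= !horner_exp !hornerM hornerXsubC subrr !mul0r.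
  by move/eqP; rewrite sqrf_eq0.
have E1 : X1 ^+ 2 * ('X - r%:P) = R * Y ^+ 2.
  apply: (mulfI Xr0); rewrite [RHS]mulrA -E EX; ring.
have /factor_theorem [Y1 EY] : root Y r.
  have := congr1 (fun p => p.[r]) E1.
  rewrite /= hornerM [in RHS]hornerM !horner_exp hornerXsubC subrr mulr0.
  by move/esym/eqP; rewrite mulf_eq0 (negbTE HR) /= sqrf_eq0.
have E2 : X1 ^+ 2 = ('X - r%:P) * R * Y1 ^+ 2.
  apply: (mulIf Xr0); rewrite E1 EY; ring.
have Y10 : Y1 != 0 by apply: contraNneq Y0; rewrite EY => ->; rewrite mul0r.
have : (size Y1 < n)%N.
  move: HY; rewrite EY size_mul // ?size_XsubC //.
  by rewrite addn2 /=.
by move/IH => /(_ X1 E2) [_ /eqP]; rewrite (negbTE Y10).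
Qed.

End PA.
Import PA.

Module PB.

Section Norm.
Variables (k : fieldType) (P Q R1 : {poly k}) (x1 : k).
Hypothesis two0 : (2%:R : k) != 0.
Hypothesis P0 : P.[0] != 0.
Hypothesis Q0 : Q.[0] != 0.
Hypothesis PQx : P * Q = ('X - x1%:P) * R1.
Hypothesis R1x : R1.[x1] != 0.

Definition NA (a b c d : {poly k}) :=
  a ^+ 2 + b ^+ 2 * ('X * P) - c ^+ 2 * ('X * Q) - d ^+ 2 * ('X * P) * ('X * Q).
Definition NB (a b c d : {poly k}) :=
  2%:R * a * b - 2%:R * c * d * ('X * Q).
Definition Nn a b c d := NA a b c d ^+ 2 - NB a b c d ^+ 2 * ('X * P).

Lemma two0p : (2%:R : {poly k}) != 0.
Proof. by rewrite -polyC_natr polyC_eq0. Qed.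

Lemma keyX (S X Y : {poly k}) : S.[0] != 0 -> X ^+ 2 = ('X * S) * Y ^+ 2 -> X = 0 /\ Y = 0.
Proof. by move=> S0 E; apply: (@sq_key _ 0 S X Y S0); rewrite polyC0 subr0 E. Qed.

Lemma keyPQ (X Y : {poly k}) : X ^+ 2 = (P * Q) * Y ^+ 2 -> X = 0 /\ Y = 0.
Proof. by move=> E; apply: (@sq_key _ x1 R1 X Y R1x); rewrite -PQx. Qed.

Lemma cancel2 (x y : {poly k}) : 2%:R * x = 2%:R * y -> x = y.
Proof. exact: (mulfI two0p). Qed.

Lemma XP0 : 'X * P != 0.
Proof. by rewrite mulf_neq0 ?polyX_eq0 //; apply: contraNneq P0 => ->; rewrite horner0. Qed.
Lemma XQ0 : 'X * Q != 0.
Proof. by rewrite mulf_neq0 ?polyX_eq0 //; apply: contraNneq Q0 => ->; rewrite horner0. Qed.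
Lemma Pn0 : P != 0.
Proof. by apply: contraNneq P0 => ->; rewrite horner0. Qed.

Lemma Nn_eq0 a b c d : Nn a b c d = 0 -> [/\ a = 0, b = 0, c = 0 & d = 0].
Proof.
rewrite /Nn => /eqP; rewrite subr_eq0 => /eqP E0.
have [/eqP HA /eqP HB] := @keyX P _ _ P0 (etrans E0 (mulrC _ _)).
move/eqP: HA => HA; move/eqP: HB => HB.
have HB' : a * b = c * d * ('X * Q).
  apply: cancel2; transitivity (NB a b c d + 2%:R * (c * d * ('X * Q))); first (rewrite /NB; ring).
  by rewrite HB add0r.
have HA' : a ^+ 2 + b ^+ 2 * ('X * P) = c ^+ 2 * ('X * Q) + d ^+ 2 * ('X * P) * ('X * Q).
  transitivity (NA a b c d + (c ^+ 2 * ('X * Q) + d ^+ 2 * ('X * P) * ('X * Q))); first (rewrite /NA; ring).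
  by rewrite HA add0r.
have Hsq : (a ^+ 2 - b ^+ 2 * ('X * P)) ^+ 2 = (('X * Q) * (c ^+ 2 - d ^+ 2 * ('X * P))) ^+ 2.
  transitivity ((a ^+ 2 + b ^+ 2 * ('X * P)) ^+ 2 - 4%:R * (a * b) ^+ 2 * ('X * P)); first ring.
  rewrite HA' HB'; ring.
move/eqP: Hsq; rewrite eqf_sqr => /orP [] /eqP Hs.
- have Ha : a ^+ 2 = ('X * Q) * c ^+ 2.
    apply: cancel2; transitivity ((a ^+ 2 + b ^+ 2 * ('X * P)) + (a ^+ 2 - b ^+ 2 * ('X * P))); first ring.
    rewrite HA' Hs; ring.
  have [a0 c0] := @keyX Q _ _ Q0 Ha.
  have Hb : b ^+ 2 = ('X * Q) * d ^+ 2.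
    apply: (mulIf XP0); move: HA'; rewrite a0 c0; move=> H.
    transitivity (0 ^+ 2 + b ^+ 2 * ('X * P)); first ring.
    rewrite H; ring.
  have [b0 d0] := @keyX Q _ _ Q0 Hb.
  by split.
- have Ha : a ^+ 2 = (P * Q) * ('X * d) ^+ 2.
    apply: cancel2; transitivity ((a ^+ 2 + b ^+ 2 * ('X * P)) + (a ^+ 2 - b ^+ 2 * ('X * P))); first ring.
    rewrite HA' Hs; ring.
  have [a0 /eqP] := @keyPQ _ _ Ha; rewrite mulf_eq0 polyX_eq0 /= => /eqP d0.
  have Hb : (b * P) ^+ 2 = (P * Q) * c ^+ 2.
    apply: (mulIf XP0); move: HA'; rewrite a0 d0; move=> H.
    transitivity ((0 ^+ 2 + b ^+ 2 * ('X * P)) * P ^+ 2); first ring.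
    rewrite H; ring.
  have [/eqP bP0 c0] := @keyPQ _ _ Hb.
  move: bP0; rewrite mulf_eq0 (negbTE Pn0) orbF => /eqP b0.
  by split.
Qed.
End Norm.

End PB.
Import PB.

Set Implicit Arguments. Unset Strict Implicit.

Module PC.

Section Place2.
Variables (k L : fieldType) (iota : k -> L) (InF O : L -> Prop) (pi h w : L) (sigma : L -> L).
Hypothesis FB : forall a b, InF a -> InF b -> InF (a - b).
Hypothesis FM : forall a b, InF a -> InF b -> InF (a * b).
Hypothesis FV : forall a, InF a -> InF a^-1.
Hypothesis OF : forall a, O a -> InF a.
Hypothesis Oc : forall c, O (iota c).
Hypothesis O1 : O 1.
Hypothesis OB : forall a b, O a -> O b -> O (a - b).
Hypothesis OM : forall a b, O a -> O b -> O (a * b).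
Hypothesis Opi : O pi.
Hypothesis Opi' : ~ O pi^-1.
Hypothesis Oh : O h.
Hypothesis Oh' : O h^-1.
Hypothesis h0 : h != 0.
Hypothesis wsq : w ^+ 2 = pi * h.
Hypothesis Hfac : forall z, InF z -> z != 0 ->
  (O z /\ O z^-1) \/ O (z / pi) \/ O (z^-1 / pi).
Hypothesis Hdec : forall z, exists a b, [/\ InF a, InF b & z = a + b * w].
Hypothesis Huniq : forall a b, InF a -> InF b -> a + b * w = 0 -> a = 0 /\ b = 0.
Hypothesis Hsig : forall a b, InF a -> InF b -> sigma (a + b * w) = a - b * w.

Definition Op z := exists a b, [/\ O a, O b & z = a + b * w].

Lemma O0 : O 0. Proof. by rewrite -(subrr 1); apply: OB. Qed.
Lemma ON a : O a -> O (- a). Proof. by move=> Ha; rewrite -sub0r; apply: OB => //; apply: O0. Qed.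
Lemma OD a b : O a -> O b -> O (a + b).
Proof. by move=> Ha Hb; rewrite -[b]opprK; apply: OB => //; apply: ON. Qed.
Lemma F0 : InF 0. Proof. by rewrite -(subrr pi); apply: FB; apply: OF. Qed.
Lemma FN a : InF a -> InF (- a). Proof. by move=> Ha; rewrite -sub0r; apply: FB => //; apply: F0. Qed.
Lemma FD a b : InF a -> InF b -> InF (a + b).
Proof. by move=> Ha Hb; rewrite -[b]opprK; apply: FB => //; apply: FN. Qed.

Lemma pi0 : pi != 0.
Proof. by apply/eqP => E; apply: Opi'; rewrite E invr0; apply: O0. Qed.

Lemma w0 : w != 0.
Proof.
apply/eqP => E; move: wsq; rewrite E expr2 mul0r => /esym/eqP.
by rewrite mulf_eq0 (negbTE pi0) (negbTE h0).
Qed.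

Lemma winv : w^-1 = h^-1 / pi * w.
Proof.
have : w * w = pi * h by rewrite -expr2.
move=> E; have := w0; have := pi0; have := h0; move=> *.
apply: (mulfI w0); rewrite divff // mulrA mulrC mulrA E; field.
by rewrite h0 pi0.
Qed.

Lemma Oval z : InF z -> O z \/ O z^-1.
Proof.
have [->|z0] := eqVneq z 0; first by left; apply: O0.
move=> Fz; case: (Hfac Fz z0) => [[]|[]] H; [by left|left|right].
  by rewrite -(divfK pi0 z); apply: OM.
by rewrite -(divfK pi0 z^-1); apply: OM.
Qed.

Lemma Olocal e y : O e -> O e^-1 -> e != 0 -> O y ->
  e + pi * y != 0 /\ O (e + pi * y)^-1.
Proof.
move=> Oe Oe' e0 Oy.
have Ox : O (e + pi * y) by apply: OD => //; apply: OM.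
have nz : e + pi * y != 0.
  apply/eqP => E; apply: Opi'.
  have -> : pi^-1 = - y * e^-1.
    have Ee : e = - (pi * y) by apply/eqP; rewrite -subr_eq0 opprK E.
    have : pi * y != 0 by rewrite -oppr_eq0 -Ee.
    rewrite Ee mulf_eq0 negb_or => /andP [p0 y0]; field; by rewrite oppr_eq0 mulf_neq0 // p0.
  by apply: OM => //; apply: ON.
split=> //.
case: (Hfac (OF Ox) nz) => [[//]|[] H].
  exfalso; apply: Opi'.
  have -> : pi^-1 = ((e + pi * y) / pi - y) * e^-1.
    field; by rewrite e0 pi0.
  by apply: OM => //; apply: OB.
by rewrite -(divfK pi0 (e + pi * y)^-1); apply: OM.
Qed.

Lemma OpO a : O a -> Op a.
Proof. by move=> Oa; exists a, 0; split=> //; [apply: O0 | rewrite mul0r addr0]. Qed.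

Lemma OpM a b : Op a -> Op b -> Op (a * b).
Proof.
move=> [a1 [b1 [Oa1 Ob1 ->]]] [a2 [b2 [Oa2 Ob2 ->]]].
exists (a1 * a2 + b1 * b2 * (pi * h)), (a1 * b2 + a2 * b1); split.
- apply: OD; apply: OM => //; apply: OM => //; apply: OM.
- by apply: OD; apply: OM.
- rewrite -wsq; ring.
Qed.

Lemma OpB a b : Op a -> Op b -> Op (a - b).
Proof.
move=> [a1 [b1 [Oa1 Ob1 ->]]] [a2 [b2 [Oa2 Ob2 ->]]].
exists (a1 - a2), (b1 - b2); split; try by apply: OB.
ring.
Qed.

Lemma Opw b : O b -> Op (b * w).
Proof. by move=> Ob; exists 0, b; split=> //; [apply: O0 | rewrite add0r]. Qed.

Lemma Ounit e b : O e -> O e^-1 -> e != 0 -> O b ->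
  e + b * w != 0 /\ Op (e + b * w)^-1.
Proof.
move=> Oe Oe' e0 Ob.
have [D0 OD'] := @Olocal (e * e) (- (b * b * h)) (OM Oe Oe)
  (ltac:(by rewrite invfM; apply: OM)) (mulf_neq0 e0 e0)
  (ON (OM (OM Ob Ob) Oh)).
have E : (e + b * w) * (e - b * w) = e * e + pi * - (b * b * h).
  transitivity (e * e - b * b * w ^+ 2); first ring.
  rewrite wsq; ring.
have U0 : e + b * w != 0.
  by apply: contraNneq D0 => H; rewrite -E H mul0r.
split => //.
have -> : (e + b * w)^-1 = (e - b * w) * (e * e + pi * - (b * b * h))^-1.
  have Um0 : e - b * w != 0 by apply: contraNneq D0 => H; rewrite -E H mulr0.
  rewrite -E; field; by rewrite U0 Um0.
exists (e * (e * e + pi * - (b * b * h))^-1), (- b * (e * e + pi * - (b * b * h))^-1).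
split; try by apply: OM => //; apply: ON.
ring.
Qed.

Lemma OpE a b : InF a -> InF b -> (Op (a + b * w) <-> O a /\ O b).
Proof.
move=> Fa Fb; split; last by move=> [Oa Ob]; exists a, b.
move=> [a' [b' [Oa' Ob' E]]].
have [] := @Huniq (a - a') (b - b') (FB Fa (OF Oa')) (FB Fb (OF Ob')).
  have -> : a - a' + (b - b') * w = (a + b * w) - (a' + b' * w) by ring.
  by rewrite E subrr.
by move=> /eqP; rewrite subr_eq0 => /eqP -> /eqP; rewrite subr_eq0 => /eqP ->.
Qed.

Lemma Op_not : ~ Op pi^-1.
Proof.
have Fi : InF pi^-1 by apply: FV; apply: OF.
move=> H; apply: Opi'.
have := (OpE Fi F0).1; rewrite mul0r addr0 => /(_ H) [] //.
Qed.

Lemma Op_val z : Op z \/ Op z^-1.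
Proof.
have [a [b [Fa Fb ->]]] := Hdec z.
have [->|b0] := eqVneq b 0.
  rewrite mul0r addr0; case: (Oval Fa) => H; [left|right]; exact: OpO.
have [->|a0] := eqVneq a 0.
  rewrite add0r; case: (Hfac Fb b0) => [[Ob _]|[H|H]].
  - by left; apply: Opw.
  - by left; apply: Opw; rewrite -(divfK pi0 b); apply: OM.
  - right; rewrite invfM winv.
    have -> : b^-1 * (h^-1 / pi * w) = (b^-1 / pi * h^-1) * w by ring.
    by apply: Opw; apply: OM.
have Fc : InF (a / b) by apply: FM => //; apply: FV.
have c0 : a / b != 0 by rewrite mulf_neq0 ?invr_eq0.
case: (Hfac Fc c0) => [[Oc1 Oc2]|[H|H]].
-
  have [U0 OU] := Ounit Oc1 Oc2 c0 O1.
  have -> : a + b * w = b * (a / b + 1 * w) by field.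
  case: (Oval Fb) => Ob; [left|right].
    by apply: OpM => //; [apply: OpO | exists (a/b), 1].
  rewrite invfM; apply: OpM => //; exact: OpO.
-
  have Ou : O (a / b / pi * h^-1) by apply: OM.
  have [U0 OU] := Ounit O1 (ltac:(by rewrite invr1)) (oner_neq0 _) Ou.
  have -> : a + b * w = (b * w) * (1 + a / b / pi * h^-1 * w).
    have ww : w * w = pi * h by rewrite -expr2.
    transitivity (b * w + a / b / pi * h^-1 * b * (w * w)); last by ring.
    rewrite ww; field; by rewrite b0 pi0 h0.
  case: (Oval Fb) => Ob.
    by left; apply: OpM => //; [apply: Opw | exists 1, (a / b / pi * h^-1)].
  case: (Hfac Fb b0) => [[Ob1 Ob2]|[H2|H2]].
  + by left; apply: OpM => //; [apply: Opw | exists 1, (a / b / pi * h^-1)].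
  + by left; apply: OpM => //; [apply: Opw; rewrite -(divfK pi0 b); apply: OM | exists 1, (a / b / pi * h^-1)].
  + right; rewrite invfM; apply: OpM => //.
    rewrite invfM winv.
    have -> : b^-1 * (h^-1 / pi * w) = (b^-1 / pi * h^-1) * w by ring.
    by apply: Opw; apply: OM.
-
  have Oc' : O (a / b)^-1 by rewrite -(divfK pi0 (a / b)^-1); apply: OM.
  have [U0 OU] := Ounit O1 (ltac:(by rewrite invr1)) (oner_neq0 _) Oc'.
  have -> : a + b * w = a * (1 + (a / b)^-1 * w) by field; rewrite ?a0 ?b0.
  case: (Oval Fa) => Oa; [left|right].
    by apply: OpM => //; [apply: OpO | exists 1, (a / b)^-1].
  rewrite invfM; apply: OpM => //; exact: OpO.
Qed.

Lemma Op_sig a : Op (sigma a) <-> Op a.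
Proof.
have [x [y [Fx Fy ->]]] := Hdec a.
rewrite Hsig // -mulNr (OpE Fx Fy) (OpE Fx (FN Fy)).
split=> [] [Ox Oy]; split=> //; [rewrite -[y]opprK|]; exact: ON.
Qed.

Lemma Op_max a : Op a -> place_max Op (sigma a - a).
Proof.
move=> [x [y [Ox Oy ->]]].
rewrite Hsig; [|exact: OF Ox|exact: OF Oy].
have -> : x - y * w - (x + y * w) = (- (y + y)) * w by ring.
have Og : O (- (y + y)) by apply: ON; apply: OD.
split; first exact: Opw.
have [->|g0] := eqVneq (- (y + y)) 0; first by left; rewrite mul0r.
right=> H.
have Fg : InF (- (y + y)) by apply: OF.
have E : ((- (y + y)) * w)^-1 = 0 + ((- (y + y)) * pi * h)^-1 * w.
  rewrite add0r invfM winv; field; by rewrite g0 pi0 h0.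
move: H; rewrite E (OpE F0 (FV (FM (FM Fg (OF Opi)) (OF Oh)))) => [[_ Hi]].
apply: Opi'.
have -> : pi^-1 = (- (y + y)) * h * ((- (y + y)) * pi * h)^-1.
  field; by rewrite g0 pi0 h0.
by apply: OM => //; apply: OM.
Qed.

Theorem place2 : fixes_geometric_point iota sigma.
Proof.
exists Op; split.
- split.
  + by move=> c; apply: OpO.
  + exact: OpB.
  + exact: OpM.
  + exact: Op_val.
  + by exists pi^-1; apply: Op_not.
- exact: Op_sig.
- exact: Op_max.
Qed.

Theorem place2_id : fixes_geometric_point iota id.
Proof.
exists Op; split.
- split.
  + by move=> c; apply: OpO.
  + exact: OpB.
  + exact: OpM.
  + exact: Op_val.
  + by exists pi^-1; apply: Op_not.
- by [].
- move=> a Ha; rewrite subrr; split; [exact: OpO (O0) | by left].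
Qed.
End Place2.

End PC.
Import PC.

Module PD.

Section Ev0.
Variables (k L : fieldType) (iota : {rmorphism k -> L}) (t : L).
Definition ev0 (a : {poly k}) := (map_poly iota a).[t].
Lemma ev0D a b : ev0 (a + b) = ev0 a + ev0 b.
Proof. by rewrite /ev0 rmorphD hornerD. Qed.
Lemma ev0N a : ev0 (- a) = - ev0 a.
Proof. by rewrite /ev0 rmorphN hornerN. Qed.
Lemma ev0B a b : ev0 (a - b) = ev0 a - ev0 b.
Proof. by rewrite ev0D ev0N. Qed.
Lemma ev0M a b : ev0 (a * b) = ev0 a * ev0 b.
Proof. by rewrite /ev0 rmorphM hornerM. Qed.
Lemma ev0C c : ev0 c%:P = iota c.
Proof. by rewrite /ev0 map_polyC hornerC. Qed.
Lemma ev0X : ev0 'X = t.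
Proof. by rewrite /ev0 map_polyX hornerX. Qed.
Lemma ev01 : ev0 1 = 1.
Proof. by rewrite -polyC1 ev0C rmorph1. Qed.
Lemma ev00 : ev0 0 = 0.
Proof. by rewrite -polyC0 ev0C rmorph0. Qed.
Lemma ev0n n : ev0 n%:R = n%:R.
Proof. by rewrite -polyC_natr ev0C rmorph_nat. Qed.
Lemma ev0X2 a : ev0 (a ^+ 2) = ev0 a ^+ 2.
Proof. by rewrite !expr2 ev0M. Qed.
Lemma ev0Xn a n : ev0 (a ^+ n) = ev0 a ^+ n.
Proof. by rewrite /ev0 rmorphXn horner_exp. Qed.
End Ev0.

Lemma size_fact (K : fieldType) (p p1 : {poly K}) (r : K) :
  p = p1 * ('X - r%:P) -> (size p1 <= size p)%N /\ (p != 0 -> (size p1 < size p)%N).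
Proof.
move=> ->; have [->|p10] := eqVneq p1 0; first by rewrite mul0r eqxx size_poly0.
rewrite size_mul ?polyXsubC_eq0 // size_XsubC addn2 /=.
by split => // _; rewrite ltnSn.
Qed.

Section Place1.
Variables (k L : fieldType) (iota : {rmorphism k -> L}) (t w : L) (W : {poly k}) (r : k)
  (good : {poly k} -> {poly k} -> bool).
Local Notation E := (ev0 iota t).
Hypothesis t_transc : forall p, p != 0 -> E p != 0.
Hypothesis wsq : w ^+ 2 = E W.
Hypothesis indep : forall a b, E a + E b * w = 0 -> a = 0 /\ b = 0.
Hypothesis Gnr : forall a b, good a b -> ~~ (root a r && root b r).
Hypothesis GM : forall a b a' b', good a b -> good a' b' ->
  good (a * a' + b * b' * W) (a * b' + a' * b).
Hypothesis Gc : forall c, c.[r] != 0 -> good c 0.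

Definition evw a b := E a + E b * w.
Definition InF z := exists a b c, c != 0 /\ z = evw a b / E c.
Definition Ogood z := exists a b a' b', good a' b' /\ z = evw a b / evw a' b'.
Definition piw := E ('X - r%:P).

Lemma evwM a b a' b' : evw a b * evw a' b' = evw (a * a' + b * b' * W) (a * b' + a' * b).
Proof. by rewrite /evw !ev0D !ev0M -wsq; ring. Qed.
Lemma evwB a b a' b' : evw a b - evw a' b' = evw (a - a') (b - b').
Proof. by rewrite /evw !ev0B; ring. Qed.
Lemma evwC c : evw c 0 = E c.
Proof. by rewrite /evw ev00 mul0r addr0. Qed.
Lemma evw_eq0 a b : evw a b = 0 -> a = 0 /\ b = 0.
Proof. exact: indep. Qed.
Lemma evw_inj a b a' b' : evw a b = evw a' b' -> a = a' /\ b = b'.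
Proof.
move=> H; have /evw_eq0 [] : evw (a - a') (b - b') = 0 by rewrite -evwB H subrr.
by move=> /eqP; rewrite subr_eq0 => /eqP -> /eqP; rewrite subr_eq0 => /eqP ->.
Qed.
Lemma E_nz c : c != 0 -> E c != 0. Proof. exact: t_transc. Qed.
Lemma good_nz a b : good a b -> evw a b != 0.
Proof.
move=> /Gnr; apply: contraNneq => /evw_eq0 [-> ->].
by rewrite /root horner0 eqxx.
Qed.
Lemma evw_mulE c a b : E c * evw a b = evw (c * a) (c * b).
Proof. by rewrite /evw !ev0M; ring. Qed.

Lemma evw_conj a b : evw a b * evw a (- b) = E (a * a + b * - b * W).
Proof.
rewrite evwM -evwC.
by congr evw; ring.
Qed.

Lemma InF_evw a b : InF (evw a b).
Proof. by exists a, b, 1; split; [apply: oner_neq0 | rewrite ev01 divr1]. Qed.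
Lemma InF_B x y : InF x -> InF y -> InF (x - y).
Proof.
move=> [a [b [c [c0 ->]]]] [a' [b' [c' [c0' ->]]]].
exists (c' * a - c * a'), (c' * b - c * b'), (c * c'); split; first by rewrite mulf_neq0.
rewrite -evwB -!evw_mulE ev0M.
have := E_nz c0; have := E_nz c0'; move=> *; field.
by apply/andP; split.
Qed.
Lemma InF_M x y : InF x -> InF y -> InF (x * y).
Proof.
move=> [a [b [c [c0 ->]]]] [a' [b' [c' [c0' ->]]]].
exists (a * a' + b * b' * W), (a * b' + a' * b), (c * c'); split; first by rewrite mulf_neq0.
rewrite -evwM ev0M.
have := E_nz c0; have := E_nz c0'; move=> *; field.
by apply/andP; split.
Qed.
Lemma InF_V x : InF x -> InF x^-1.
Proof.
move=> [a [b [c [c0 ->]]]].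
have [e0|e0] := eqVneq (evw a b) 0.
  by rewrite e0 mul0r invr0; have := InF_evw 0 0; rewrite /evw ev00 mul0r addr0.
have N0 : a * a + b * - b * W != 0.
  apply: contra_neq e0 => N0.
  have : evw a b * evw a (- b) = 0 by rewrite evw_conj N0 ev00.
  move/eqP; rewrite mulf_eq0 => /orP [/eqP //|/eqP /evw_eq0 [a0 b0]].
  by rewrite a0 -[b]opprK b0 oppr0 /evw ev00 mul0r addr0.
exists (c * a), (c * - b), (a * a + b * - b * W); split => //.
rewrite -evw_mulE -evw_conj.
have := E_nz c0; have := E_nz N0; rewrite -evw_conj mulf_eq0 negb_or => /andP [n1 n2] c0'.
field; by rewrite e0 c0' n2.
Qed.
Lemma InF_E c : InF (E c).
Proof. by rewrite -evwC; apply: InF_evw. Qed.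

Lemma O_evw a b a' b' : good a' b' -> Ogood (evw a b / evw a' b').
Proof. by move=> g; exists a, b, a', b'. Qed.
Lemma good1 : good 1 0. Proof. by apply: Gc; rewrite hornerC oner_neq0. Qed.
Lemma O_E c : Ogood (E c).
Proof. by have := @O_evw c 0 1 0 good1; rewrite !evwC ev01 divr1. Qed.
Lemma O_EV c : c.[r] != 0 -> Ogood (E c)^-1.
Proof. by move=> cr; have := @O_evw 1 0 c 0 (Gc cr); rewrite !evwC ev01 div1r. Qed.
Lemma OF z : Ogood z -> InF z.
Proof. by move=> [a [b [a' [b' [_ ->]]]]]; apply: InF_M; [|apply: InF_V]; apply: InF_evw. Qed.
Lemma Oc c : Ogood (iota c). Proof. by rewrite -(ev0C iota t); apply: O_E. Qed.
Lemma O1 : Ogood 1. Proof. by rewrite -(ev01 iota t); apply: O_E. Qed.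
Lemma OB x y : Ogood x -> Ogood y -> Ogood (x - y).
Proof.
move=> [a [b [a1 [b1 [g1 ->]]]]] [a' [b' [a1' [b1' [g1' ->]]]]].
have n1 := good_nz g1; have n1' := good_nz g1'.
have -> : evw a b / evw a1 b1 - evw a' b' / evw a1' b1' =
  (evw a b * evw a1' b1' - evw a' b' * evw a1 b1) / (evw a1 b1 * evw a1' b1').
  by field; rewrite n1 n1'.
rewrite !evwM evwB; apply: O_evw; exact: GM.
Qed.
Lemma OM x y : Ogood x -> Ogood y -> Ogood (x * y).
Proof.
move=> [a [b [a1 [b1 [g1 ->]]]]] [a' [b' [a1' [b1' [g1' ->]]]]].
have n1 := good_nz g1; have n1' := good_nz g1'.
have -> : evw a b / evw a1 b1 * (evw a' b' / evw a1' b1') =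
  (evw a b * evw a' b') / (evw a1 b1 * evw a1' b1').
  by field; rewrite n1 n1'.
rewrite !evwM; apply: O_evw; exact: GM.
Qed.
Lemma Xr0 : 'X - r%:P != 0 :> {poly k}. Proof. by rewrite polyXsubC_eq0. Qed.
Lemma pi0 : piw != 0. Proof. exact: E_nz Xr0. Qed.
Lemma Opi : Ogood piw. Proof. exact: O_E. Qed.
Lemma Opi' : ~ Ogood piw^-1.
Proof.
move=> [a [b [a' [b' [g E1]]]]].
have n := good_nz g.
have : evw a' b' = evw (('X - r%:P) * a) (('X - r%:P) * b).
  rewrite -evw_mulE -/piw.
  transitivity (piw * (piw^-1 * evw a' b')); first by field; rewrite pi0.
  by rewrite E1 divfK.
move/evw_inj=> [Ea Eb]; move/Gnr: g; rewrite Ea Eb.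
by rewrite /root !hornerM hornerXsubC subrr !mul0r eqxx.
Qed.
Lemma OX j : Ogood (piw ^+ j).
Proof. elim: j => [|j IH]; first by rewrite expr0; apply: O1. by rewrite exprS; apply: OM => //; apply: Opi. Qed.

Hypothesis Hbase : forall a b, ~~ (root a r && root b r) ->
  exists n e, [/\ Ogood e, Ogood e^-1, e != 0 & evw a b = piw ^+ n * e].

Lemma pow_form a b : (a != 0) || (b != 0) ->
  exists n e, [/\ Ogood e, Ogood e^-1, e != 0 & evw a b = piw ^+ n * e].
Proof.
elim: {a b}(size a + size b).+1 {-2}a {-2}b (ltnSn (size a + size b)) => // N IH a b Hs nz.
case Hr: (root a r && root b r); last by apply: Hbase; rewrite Hr.
move/andP: Hr => [/factor_theorem [a1 Ea] /factor_theorem [b1 Eb]].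
have [s1 s1'] := size_fact Ea; have [s2 s2'] := size_fact Eb.
have nz1 : (a1 != 0) || (b1 != 0).
  by move: nz; rewrite Ea Eb; case/orP; rewrite mulf_eq0 negb_or => /andP [-> _]; rewrite ?orbT.
have Hs1 : (size a1 + size b1 < N)%N.
  move: Hs; rewrite ltnS => Hs; apply: leq_trans Hs.
  case/orP: nz => [/s1' h1|/s2' h2].
    by rewrite -addSn leq_add.
  by rewrite -addnS leq_add.
have [n [e [Oe Oe' e0 E1]]] := IH _ _ Hs1 nz1.
exists n.+1, e; split => //.
rewrite Ea Eb mulrC [b1 * _]mulrC -evw_mulE E1 /piw exprS; ring.
Qed.

Lemma Hfac z : InF z -> z != 0 ->
  (Ogood z /\ Ogood z^-1) \/ Ogood (z / piw) \/ Ogood (z^-1 / piw).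
Proof.
move=> [a [b [c [c0 Ez]]]] z0.
have ab : (a != 0) || (b != 0).
  apply: contraNT z0; rewrite negb_or !negbK => /andP [/eqP a0 /eqP b0].
  by rewrite Ez a0 b0 /evw ev00 mul0r addr0 mul0r.
have [n [e [Oe Oe' e0 Ee]]] := pow_form ab.
have [m [q /implyP Hq Ec]] := multiplicity_XsubC c r.
have qr := Hq c0.
have q0 : q != 0 by apply: contraNneq qr => ->; rewrite /root horner0.
have Eq0 := E_nz q0.
set e' := e / E q.
have Oe1 : Ogood e' by apply: OM => //; apply: O_EV.
have Oe2 : Ogood e'^-1 by rewrite invfM invrK; apply: OM => //; apply: O_E.
have e'0 : e' != 0 by rewrite mulf_neq0 ?invr_neq0.
have Ez' : z = piw ^+ n * e' / piw ^+ m.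
  rewrite Ez Ee Ec ev0M ev0Xn -/piw /e'; field.
  by rewrite Eq0 expf_neq0 // pi0.
have p0 := pi0.
case: (ltngtP n m) => Hnm.
- right; right.
  have [j Hj] : exists j, m = (n + j.+1)%N by exists (m - n).-1; lia.
  have -> : z^-1 / piw = piw ^+ j * e'^-1.
    rewrite Ez' Hj exprD exprS; field; by rewrite e'0 p0 !expf_neq0.
  by apply: OM => //; apply: OX.
- right; left.
  have [j Hj] : exists j, n = (m + j.+1)%N by exists (n - m).-1; lia.
  have -> : z / piw = piw ^+ j * e'.
    rewrite Ez' Hj exprD exprS; field; by rewrite ?e'0 p0 !expf_neq0.
  by apply: OM => //; apply: OX.
- left; rewrite Ez' Hnm mulrC mulrA mulVf ?mul1r ?expf_neq0 //.
Qed.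
Variables (u2 : L) (H : {poly k}) (sigma : L -> L).
Hypothesis Hr : H.[r] != 0.
Hypothesis u2sq : u2 ^+ 2 = piw * E H.
Hypothesis Hdec : forall z, exists a b, [/\ InF a, InF b & z = a + b * u2].
Hypothesis Huniq : forall a b, InF a -> InF b -> a + b * u2 = 0 -> a = 0 /\ b = 0.
Hypothesis Hsig : forall a b, InF a -> InF b -> sigma (a + b * u2) = a - b * u2.

Theorem place1 : fixes_geometric_point iota sigma /\ fixes_geometric_point iota id.
Proof.
have H0 : H != 0 by apply: contraNneq Hr => ->; rewrite horner0.
split.
  apply: (@place2 k L iota InF Ogood piw (E H) u2 sigma) => //.
  - exact: InF_B. - exact: InF_M. - exact: InF_V. - exact: OF.
  - exact: Oc. - exact: O1. - exact: OB. - exact: OM. - exact: Opi. - exact: Opi'.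
  - exact: O_E. - exact: O_EV. - exact: E_nz. - exact: Hfac.
apply: (@place2_id k L iota InF Ogood piw (E H) u2) => //.
  - exact: InF_B. - exact: InF_M. - exact: InF_V. - exact: OF.
  - exact: Oc. - exact: O1. - exact: OB. - exact: OM. - exact: Opi. - exact: Opi'.
  - exact: O_E. - exact: O_EV. - exact: E_nz. - exact: Hfac.
Qed.
End Place1.

End PD.
Import PD.

Module PE.

Section Inst.
Variables (k L : fieldType) (iota : {rmorphism k -> L}) (t w : L) (W : {poly k}) (r : k).
Local Notation E := (ev0 iota t).
Hypothesis t_transc : forall p, p != 0 -> E p != 0.
Hypothesis wsq : w ^+ 2 = E W.
Hypothesis indep : forall a b, E a + E b * w = 0 -> a = 0 /\ b = 0.
Local Notation evw := (evw iota t w).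

Lemma evw10 : evw 1 0 = 1.
Proof. by rewrite /PD.evw ev01 ev00 mul0r addr0. Qed.

Lemma evw_nz a b : ~~ (root a r && root b r) -> evw a b != 0.
Proof.
apply: contraNneq => /indep [-> ->].
by rewrite /root horner0 eqxx.
Qed.

Section Split.
Variables (c0 : k).
Hypothesis Wr : W.[r] = c0 ^+ 2.
Hypothesis c00 : c0 != 0.
Hypothesis two0 : (2%:R : k) != 0.
Definition sgood (a b : {poly k}) := a.[r] + b.[r] * c0 != 0.

Lemma sGnr a b : sgood a b -> ~~ (root a r && root b r).
Proof.
rewrite /sgood; apply: contraNN => /andP [/eqP -> /eqP ->].
by rewrite mul0r addr0.
Qed.
Lemma sGM a b a' b' : sgood a b -> sgood a' b' ->
  sgood (a * a' + b * b' * W) (a * b' + a' * b).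
Proof.
rewrite /sgood => g g'.
have -> : (a * a' + b * b' * W).[r] + (a * b' + a' * b).[r] * c0 =
  (a.[r] + b.[r] * c0) * (a'.[r] + b'.[r] * c0).
  rewrite !hornerE Wr; ring.
by rewrite mulf_neq0.
Qed.
Lemma sGc c : c.[r] != 0 -> sgood c 0.
Proof. by rewrite /sgood horner0 mul0r addr0. Qed.

Lemma sbase a b : ~~ (root a r && root b r) ->
  exists n e, [/\ Ogood iota t w sgood e, Ogood iota t w sgood e^-1, e != 0
    & evw a b = piw iota t r ^+ n * e].
Proof.
move=> nr.
have e0 := evw_nz nr.
case g: (sgood a b).
  exists 0%N, (evw a b); split => //.
  - by exists a, b, 1, 0; split; [apply: sGc; rewrite hornerC oner_neq0 | rewrite evw10 divr1].
  - by exists 1, 0, a, b; split; rewrite ?g // evw10 div1r.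
  - by rewrite expr0 mul1r.
have g' : sgood a (- b).
  move: g nr; rewrite /sgood hornerN => /negbFE /eqP g.
  apply: contraNN => /eqP g'.
  have a0 : a.[r] = 0.
    apply: (mulfI two0); rewrite mulr0.
    transitivity ((a.[r] + b.[r] * c0) + (a.[r] + - b.[r] * c0)); first ring.
    by rewrite g g' addr0.
  have b0 : b.[r] = 0.
    move: g; rewrite a0 add0r => /eqP; rewrite mulf_eq0 (negbTE c00) orbF => /eqP //.
  by rewrite /root a0 b0 eqxx.
have e0' : evw a (- b) != 0.
  by apply: evw_nz; apply: sGnr.
set N := a * a + b * - b * W.
have EN : evw a b * evw a (- b) = E N by rewrite (evw_conj wsq).
have N0 : N != 0.
  by apply: contraTneq (mulf_neq0 e0 e0') => N0; rewrite EN N0 ev00 eqxx.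
have [m [q /implyP Hq Eq]] := multiplicity_XsubC N r.
have qr := Hq N0.
exists m, (E q / evw a (- b)); split.
- by exists q, 0, a, (- b); split => //; rewrite -(evwC iota t w q).
- exists a, (- b), q, 0; split; first by apply: sGc.
  by rewrite invfM invrK -(evwC iota t w q) mulrC.
- rewrite mulf_neq0 ?invr_neq0 //; apply: t_transc.
  by apply: contraNneq qr => ->; rewrite /root horner0.
- have : evw a b = E N / evw a (- b) by rewrite -EN; field.
  move=> ->; rewrite Eq ev0M ev0Xn /piw; field; exact: e0'.
Qed.
End Split.

Section Inert.
Hypothesis nsq : forall x : k, x ^+ 2 != W.[r].
Definition igood (a b : {poly k}) := ~~ (root a r && root b r).

Lemma iN a b : igood a b -> (a * a + b * - b * W).[r] != 0.
Proof.
rewrite /igood /root !hornerE => nr.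
have [b0|b0] := eqVneq b.[r] 0.
  by move: nr; rewrite b0 eqxx andbT => nr; rewrite !mul0r addr0 mulf_neq0.
apply/eqP => H.
have E2 : (a.[r] / b.[r]) ^+ 2 =
  (a.[r] * a.[r] + b.[r] * - b.[r] * W.[r]) / (b.[r] * b.[r]) + W.[r].
  by field.
by move: (nsq (a.[r] / b.[r])); rewrite E2 H mul0r add0r eqxx.
Qed.

Lemma iGM a b a' b' : igood a b -> igood a' b' ->
  igood (a * a' + b * b' * W) (a * b' + a' * b).
Proof.
move=> g g'; have N0 := iN g; move: g'; rewrite /igood /root.
apply: contraNN => /andP [/eqP X0 /eqP Y0].
move: X0 Y0 N0; rewrite !hornerE => X0 Y0 N0.
have A : a'.[r] * (a.[r] * a.[r] + b.[r] * - b.[r] * W.[r]) = 0.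
  transitivity (a.[r] * (a.[r] * a'.[r] + b.[r] * b'.[r] * W.[r]) -
    b.[r] * W.[r] * (a.[r] * b'.[r] + a'.[r] * b.[r])); first ring.
  by rewrite X0 Y0; ring.
have B : b'.[r] * (a.[r] * a.[r] + b.[r] * - b.[r] * W.[r]) = 0.
  transitivity (a.[r] * (a.[r] * b'.[r] + a'.[r] * b.[r]) -
    b.[r] * (a.[r] * a'.[r] + b.[r] * b'.[r] * W.[r])); first ring.
  by rewrite X0 Y0; ring.
move/eqP: A; move/eqP: B; rewrite !mulf_eq0 (negbTE N0) !orbF => -> ->.
by [].
Qed.

Lemma iGc c : c.[r] != 0 -> igood c 0.
Proof. by rewrite /igood /root => H; apply/negP => /andP [H1 _]; move: H; rewrite H1. Qed.

Lemma ibase a b : ~~ (root a r && root b r) ->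
  exists n e, [/\ Ogood iota t w igood e, Ogood iota t w igood e^-1, e != 0
    & evw a b = piw iota t r ^+ n * e].
Proof.
move=> nr.
have e0 := evw_nz nr.
exists 0%N, (evw a b); split => //.
- by exists a, b, 1, 0; split; [apply: iGc; rewrite hornerC oner_neq0 | rewrite evw10 divr1].
- exists a, (- b), (a * a + b * - b * W), 0; split; first by apply: iGc; apply: iN.
  rewrite evwC -(evw_conj wsq); field.
  have : evw a (- b) != 0.
    apply: evw_nz; move: nr; rewrite /root hornerN oppr_eq0; done.
  by move=> ->; rewrite e0.
- by rewrite expr0 mul1r.
Qed.
End Inert.

Variables (u2 : L) (H : {poly k}) (sigma : L -> L).
Hypothesis two0 : (2%:R : k) != 0.
Hypothesis Hr : H.[r] != 0.
Hypothesis u2sq : u2 ^+ 2 = piw iota t r * E H.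
Hypothesis Hdec : forall z, exists a b, [/\ InF iota t w a, InF iota t w b & z = a + b * u2].
Hypothesis Huniq : forall a b, InF iota t w a -> InF iota t w b -> a + b * u2 = 0 -> a = 0 /\ b = 0.
Hypothesis Hsig : forall a b, InF iota t w a -> InF iota t w b -> sigma (a + b * u2) = a - b * u2.

Lemma place_any : (exists c0, c0 != 0 /\ W.[r] = c0 ^+ 2) \/ (forall x, x ^+ 2 != W.[r]) ->
  fixes_geometric_point iota sigma /\ fixes_geometric_point iota id.
Proof.
case => [[c0 [c00 Wr]]|nsq].
- apply: (@place1 k L iota t w W r (sgood c0) t_transc wsq indep _ _ _ _ u2 H sigma Hr u2sq Hdec Huniq Hsig).
  + exact: sGnr.
  + exact: sGM Wr.
  + exact: sGc.
  + exact: (sbase c00 two0).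
- apply: (@place1 k L iota t w W r igood t_transc wsq indep _ _ _ _ u2 H sigma Hr u2sq Hdec Huniq Hsig).
  + by move=> a b.
  + exact: (iGM nsq).
  + exact: iGc.
  + exact: (ibase nsq).
Qed.
End Inst.

End PE.
Import PE.

Module PF.

Record quad (k : fieldType) := Quad { qa : {poly k}; qb : {poly k}; qc : {poly k}; qd : {poly k} }.

Section Main.
Variables (k : fieldType) (P Q R1 : {poly k}) (x1 : k).
Variables (L : fieldType) (iota : {rmorphism k -> L}) (t u v : L).
Hypothesis two0 : (2%:R : k) != 0.
Hypothesis P0 : P.[0] != 0.
Hypothesis Q0 : Q.[0] != 0.
Hypothesis PQx : P * Q = ('X - x1%:P) * R1.
Hypothesis R1x : R1.[x1] != 0.
Local Notation E := (ev0 iota t).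
Hypothesis t_transc : forall p, p != 0 -> E p != 0.
Hypothesis usq : u ^+ 2 = E ('X * P).
Hypothesis vsq : v ^+ 2 = E ('X * Q).

Definition ev4 (x : quad k) := E (qa x) + E (qb x) * u + E (qc x) * v + E (qd x) * (u * v).
Definition qmul (x y : quad k) :=
  let: Quad a b c d := x in let: Quad a' b' c' d' := y in
  Quad (a * a' + b * b' * ('X * P) + c * c' * ('X * Q) + d * d' * ('X * P) * ('X * Q))
       (a * b' + b * a' + (c * d' + d * c') * ('X * Q))
       (a * c' + c * a' + (b * d' + d * b') * ('X * P))
       (a * d' + d * a' + b * c' + c * b').
Definition qsub (x y : quad k) := Quad (qa x - qa y) (qb x - qb y) (qc x - qc y) (qd x - qd y).
Definition qscale (c : {poly k}) (x : quad k) := Quad (c * qa x) (c * qb x) (c * qc x) (c * qd x).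
Definition sg (b : bool) : {poly k} := if b then -1 else 1.
Definition qconj s1 s2 (x : quad k) :=
  Quad (qa x) (sg s1 * qb x) (sg s2 * qc x) (sg s1 * sg s2 * qd x).
Definition qC c : quad k := Quad c 0 0 0.

Lemma ev4M x y : ev4 (qmul x y) = ev4 x * ev4 y.
Proof.
case: x => a b c d; case: y => a' b' c' d'.
rewrite /ev4 /= !(ev0D, ev0M).
have hu : u * u = E 'X * E P by rewrite -expr2 usq ev0M.
have hv : v * v = E 'X * E Q by rewrite -expr2 vsq ev0M.
set p := E 'X * E P; set q := E 'X * E Q.
apply/eqP; rewrite -subr_eq0; apply/eqP.
transitivity (- ((u * u - p) * (E b * E b' + (E b * E d' + E d * E b') * v + E d * E d' * (v * v))
  + (v * v - q) * (E c * E c' + (E c * E d' + E d * E c') * u + E d * E d' * p))).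
  rewrite /p /q; ring.
by rewrite hu hv !subrr !mul0r addr0 oppr0.
Qed.

Lemma ev4B x y : ev4 (qsub x y) = ev4 x - ev4 y.
Proof. rewrite /ev4 /= !ev0B; ring. Qed.
Lemma ev4Z c x : ev4 (qscale c x) = E c * ev4 x.
Proof. rewrite /ev4 /= !ev0M; ring. Qed.
Lemma ev4C c : ev4 (qC c) = E c.
Proof. by rewrite /ev4 /= ev00 !mul0r !addr0. Qed.

Lemma qconjB s1 s2 x y : qconj s1 s2 (qsub x y) = qsub (qconj s1 s2 x) (qconj s1 s2 y).
Proof. by rewrite /qconj /qsub /=; congr Quad; ring. Qed.
Lemma qconjZ s1 s2 c x : qconj s1 s2 (qscale c x) = qscale c (qconj s1 s2 x).
Proof. by rewrite /qconj /qscale /=; congr Quad; ring. Qed.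
Lemma qconjM s1 s2 x y : qconj s1 s2 (qmul x y) = qmul (qconj s1 s2 x) (qconj s1 s2 y).
Proof.
case: x => a b c d; case: y => a' b' c' d'.
by case: s1; case: s2; rewrite /qconj /qmul /sg /=; congr Quad; ring.
Qed.
Lemma qconjC s1 s2 c : qconj s1 s2 (qC c) = qC c.
Proof. by rewrite /qconj /qC /=; congr Quad; ring. Qed.
Lemma qconjK s1 s2 s1' s2' x :
  qconj s1 s2 (qconj s1' s2' x) = qconj (s1 (+) s1') (s2 (+) s2') x.
Proof.
case: x => a b c d.
by case: s1; case: s2; case: s1'; case: s2'; rewrite /qconj /sg /=; congr Quad; ring.
Qed.
Lemma qconj0 x : qconj false false x = x.
Proof. by case: x => a b c d; rewrite /qconj /sg /=; congr Quad; ring. Qed.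

Definition qnorm (x : quad k) := Nn k P Q (qa x) (qb x) (qc x) (qd x).
Definition qnconj (x : quad k) :=
  qmul (Quad (qa x) (qb x) (- qc x) (- qd x))
    (Quad (NA k P Q (qa x) (qb x) (qc x) (qd x)) (- NB k Q (qa x) (qb x) (qc x) (qd x)) 0 0).

Lemma ev4_norm x : ev4 x * ev4 (qnconj x) = E (qnorm x).
Proof.
rewrite /qnconj ev4M mulrA -ev4M -ev4M -ev4C; congr ev4.
case: x => a b c d; rewrite /qmul /qnorm /Nn /NA /NB /qC /=.
congr Quad; ring.
Qed.

Lemma qnorm0 x : qnorm x = 0 -> x = Quad 0 0 0 0.
Proof.
move=> N0; have [] := @Nn_eq0 k P Q R1 x1 two0 P0 Q0 PQx R1x _ _ _ _ N0.
by case: x {N0} => a b c d /= -> -> -> ->.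
Qed.

Lemma ev4_eq0 x : ev4 x = 0 -> x = Quad 0 0 0 0.
Proof.
move=> H.
have : E (qnorm x) = 0 by rewrite -ev4_norm H mul0r.
move=> HE; have N0 : qnorm x = 0.
  by apply/eqP; apply: contraLR (eqxx (0 : L)) => /t_transc; rewrite HE.
have [] := @Nn_eq0 k P Q R1 x1 two0 P0 Q0 PQx R1x _ _ _ _ N0.
by case: x {H HE N0} => a b c d /= -> -> -> ->.
Qed.

Lemma ev4_inj x y : ev4 x = ev4 y -> x = y.
Proof.
move=> H; have : ev4 (qsub x y) = 0 by rewrite ev4B H subrr.
move/ev4_eq0; case: x {H} => a b c d; case: y => a' b' c' d'; rewrite /qsub /=.
case=> /eqP; rewrite subr_eq0 => /eqP -> /eqP; rewrite subr_eq0 => /eqP ->.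
by move=> /eqP; rewrite subr_eq0 => /eqP -> /eqP; rewrite subr_eq0 => /eqP ->.
Qed.

Lemma E0 c : c != 0 -> E c != 0. Proof. exact: t_transc. Qed.

Definition Rep z (p : quad k * {poly k}) := p.2 != 0 /\ z = ev4 p.1 / E p.2.

Hypothesis L_gen : forall S : L -> Prop,
  (forall c : k, S (iota c)) -> S t -> S u -> S v ->
  (forall a b, S a -> S b -> S (a - b)) ->
  (forall a b, S a -> S b -> S (a * b)) ->
  (forall a, S a -> S a^-1) ->
  forall a, S a.

Lemma rep_const x : Rep (ev4 x) (x, 1).
Proof. by split; [apply: oner_neq0 | rewrite /= ev01 divr1]. Qed.

Lemma rep_ex z : exists p, Rep z p.
Proof.
move: z; apply: L_gen.
- move=> c; exists (qC c%:P, 1); rewrite -(ev0C iota t) -ev4C; exact: rep_const.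
- exists (qC 'X, 1); rewrite -{1}(ev0X iota t) -ev4C; exact: rep_const.
- exists (Quad 0 1 0 0, 1); split; first exact: oner_neq0.
  by rewrite /ev4 /= ev01 ev00 divr1; ring.
- exists (Quad 0 0 1 0, 1); split; first exact: oner_neq0.
  by rewrite /ev4 /= ev01 ev00 divr1; ring.
- move=> a b [[x c] [/= c0 ->]] [[y d] [/= d0 ->]].
  exists (qsub (qscale d x) (qscale c y), c * d); split; first by rewrite /= mulf_neq0.
  rewrite /= ev4B !ev4Z ev0M; field; by rewrite !E0.
- move=> a b [[x c] [/= c0 ->]] [[y d] [/= d0 ->]].
  exists (qmul x y, c * d); split; first by rewrite /= mulf_neq0.
  rewrite /= ev4M ev0M; field; by rewrite !E0.
- move=> a [[x c] [/= c0 ->]].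
  have [e0|e0] := eqVneq (ev4 x) 0.
    exists (Quad 0 0 0 0, 1); rewrite e0 mul0r invr0; split; first exact: oner_neq0.
    by rewrite /= /ev4 /= !ev00 ev01 !mul0r !addr0 mul0r.
  have N0 : qnorm x != 0.
    apply: contra_neq e0 => /qnorm0 ->.
    by rewrite /ev4 /= !ev00 !mul0r !addr0.
  exists (qscale c (qnconj x), qnorm x); split => //=.
  rewrite ev4Z -ev4_norm.
  have : ev4 (qnconj x) != 0.
    by apply: contraNneq (E0 N0) => H; rewrite -ev4_norm H mulr0.
  move=> H; field; by rewrite H e0 E0.
Qed.

Definition rp z : quad k * {poly k} :=
  proj1_sig (constructive_indefinite_description _ (rep_ex z)).
Lemma rpP z : Rep z (rp z).
Proof. exact: (proj2_sig (constructive_indefinite_description _ (rep_ex z))). Qed.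

Definition esig s1 s2 z := ev4 (qconj s1 s2 (rp z).1) / E (rp z).2.

Lemma esig_rep s1 s2 x c : c != 0 -> esig s1 s2 (ev4 x / E c) = ev4 (qconj s1 s2 x) / E c.
Proof.
move=> c0; rewrite /esig; case: (rpP (ev4 x / E c)).
move: (rp _) => [x' c'] /= c0' Ez.
have H : qscale c' x = qscale c x'.
  apply: ev4_inj; rewrite !ev4Z.
  transitivity (E c' * E c * (ev4 x / E c)); first by field; rewrite E0.
  rewrite Ez; field; by rewrite E0.
have := congr1 (fun y => ev4 (qconj s1 s2 y)) H; rewrite /= !qconjZ !ev4Z => H2.
transitivity (E c * ev4 (qconj s1 s2 x') / (E c * E c')); first by field; rewrite !E0.
rewrite -H2; field; by rewrite !E0.
Qed.

Lemma esig_ev4 s1 s2 x : esig s1 s2 (ev4 x) = ev4 (qconj s1 s2 x).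
Proof. by have := @esig_rep s1 s2 x 1 (oner_neq0 _); rewrite ev01 !divr1. Qed.

Lemma esigB s1 s2 a b : esig s1 s2 (a - b) = esig s1 s2 a - esig s1 s2 b.
Proof.
case: (rpP a) (rpP b); move: (rp a) (rp b) => [x c] [y d] /= [c0 ->] [d0 ->].
have -> : ev4 x / E c - ev4 y / E d = ev4 (qsub (qscale d x) (qscale c y)) / E (c * d).
  rewrite ev4B !ev4Z ev0M; field; by rewrite !E0.
rewrite !esig_rep ?mulf_neq0 // qconjB !qconjZ ev4B !ev4Z ev0M; field; by rewrite !E0.
Qed.

Lemma esigM s1 s2 a b : esig s1 s2 (a * b) = esig s1 s2 a * esig s1 s2 b.
Proof.
case: (rpP a) (rpP b); move: (rp a) (rp b) => [x c] [y d] /= [c0 ->] [d0 ->].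
have -> : ev4 x / E c * (ev4 y / E d) = ev4 (qmul x y) / E (c * d).
  rewrite ev4M ev0M; field; by rewrite !E0.
rewrite !esig_rep ?mulf_neq0 // qconjM ev4M ev0M; field; by rewrite !E0.
Qed.

Lemma esigC s1 s2 c : esig s1 s2 (E c) = E c.
Proof. by rewrite -ev4C esig_ev4 qconjC. Qed.

Lemma esig1 s1 s2 : esig s1 s2 1 = 1.
Proof. by rewrite -(ev01 iota t) esigC. Qed.

Lemma esigK s1 s2 s1' s2' z :
  esig s1 s2 (esig s1' s2' z) = esig (s1 (+) s1') (s2 (+) s2') z.
Proof.
case: (rpP z); move: (rp z) => [x c] /= [c0 ->].
by rewrite !esig_rep // qconjK.
Qed.

Lemma esig00 z : esig false false z = z.
Proof.
case: (rpP z); move: (rp z) => [x c] /= [c0 ->].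
by rewrite esig_rep // qconj0.
Qed.

Lemma esig_u s1 s2 : esig s1 s2 u = (if s1 then - u else u).
Proof.
have -> : u = ev4 (Quad 0 1 0 0) by rewrite /ev4 /= ev01 ev00; ring.
rewrite esig_ev4 /qconj /ev4 /= !mulr0 !ev00; case: s1; rewrite /sg ?mulr1 ?ev0N ?ev01; ring.
Qed.
Lemma esig_v s1 s2 : esig s1 s2 v = (if s2 then - v else v).
Proof.
have -> : v = ev4 (Quad 0 0 1 0) by rewrite /ev4 /= ev01 ev00; ring.
rewrite esig_ev4 /qconj /ev4 /= !mulr0 !ev00; case: s2; rewrite /sg ?mulr1 ?ev0N ?ev01; ring.
Qed.
Lemma esig_t s1 s2 : esig s1 s2 t = t.
Proof. by rewrite -{1 2}(ev0X iota t) esigC. Qed.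
Lemma esig_iota s1 s2 c : esig s1 s2 (iota c) = iota c.
Proof. by rewrite -(ev0C iota t) esigC. Qed.

Definition esigf s1 s2 := esig s1 s2.
Lemma esig_zmod s1 s2 : GRing.zmod_morphism (esigf s1 s2).
Proof. by move=> a b; apply: esigB. Qed.
Lemma esig_monoid s1 s2 : GRing.monoid_morphism (esigf s1 s2).
Proof. by split; [apply: esig1 | move=> a b; apply: esigM]. Qed.
HB.instance Definition _ s1 s2 := GRing.isZmodMorphism.Build L L (esigf s1 s2) (esig_zmod s1 s2).
HB.instance Definition _ s1 s2 := GRing.isMonoidMorphism.Build L L (esigf s1 s2) (esig_monoid s1 s2).
Definition erm s1 s2 : {rmorphism L -> L} := esigf s1 s2.
Lemma ermE s1 s2 z : erm s1 s2 z = esig s1 s2 z. Proof. by []. Qed.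

Lemma X0 : 'X != 0 :> {poly k}. Proof. by rewrite polyX_eq0. Qed.
Lemma t0 : t != 0. Proof. by rewrite -(ev0X iota t); apply: E0; apply: X0. Qed.
Lemma hu : u * u = E 'X * E P. Proof. by rewrite -expr2 usq ev0M. Qed.
Lemma hv : v * v = E 'X * E Q. Proof. by rewrite -expr2 vsq ev0M. Qed.
Lemma Pn0 : P != 0. Proof. by apply: contraNneq P0 => ->; rewrite horner0. Qed.
Lemma Qn0 : Q != 0. Proof. by apply: contraNneq Q0 => ->; rewrite horner0. Qed.

Lemma q0 a b c d : ev4 (Quad a b c d) = 0 -> [/\ a = 0, b = 0, c = 0 & d = 0].
Proof. by move/ev4_eq0 => [-> -> -> ->]. Qed.

Lemma mul_eq0 (a b : {poly k}) : a != 0 -> a * b = 0 -> b = 0.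
Proof. by move=> a0 /eqP; rewrite mulf_eq0 (negbTE a0) => /eqP. Qed.

Lemma evw0 w : PD.evw iota t w 0 0 = 0.
Proof. by rewrite /PD.evw ev00 mul0r addr0. Qed.

Lemma place_e1 (P1 : {poly k}) (c1 : k) :
  P = P1 * ('X - x1%:P) -> x1 * P1.[x1] != 0 -> c1 != 0 -> x1 * Q.[x1] = c1 ^+ 2 ->
  fixes_geometric_point iota (erm true false) /\ fixes_geometric_point iota id.
Proof.
move=> HP Hr c10 Hc1.
have indep : forall a b, E a + E b * v = 0 -> a = 0 /\ b = 0.
  move=> a b H; have : ev4 (Quad a 0 b 0) = 0 by rewrite /ev4 /= ev00 !mul0r !addr0 H.
  by case/q0.
apply: (@place_any k L iota t v ('X * Q) x1 t_transc vsq indep u ('X * P1) (erm true false) two0).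
- by rewrite hornerM hornerX.
- rewrite /piw usq -ev0M HP; congr E; ring.
- move=> z; case: (rpP z); move: (rp z) => [[a b c d] cc] /= [cc0 ->].
  exists (PD.evw iota t v a c / E cc), (PD.evw iota t v b d / E cc); split.
  + by exists a, c, cc.
  + by exists b, d, cc.
  + rewrite /ev4 /PD.evw /=; field; by rewrite E0.
- move=> al be [a [b [c [c0 ->]]]] [a' [b' [c' [c0' ->]]]] H.
  have : ev4 (Quad (c' * a) (c * a') (c' * b) (c * b')) = 0.
    transitivity (E c * E c' * (PD.evw iota t v a b / E c + PD.evw iota t v a' b' / E c' * u)).
      rewrite /ev4 /PD.evw /= !ev0M; field; by rewrite !E0.
    by rewrite H mulr0.
  case/q0 => /(mul_eq0 c0') -> /(mul_eq0 c0) -> /(mul_eq0 c0') -> /(mul_eq0 c0) ->.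
  by rewrite evw0 !mul0r.
- move=> al be [a [b [c [c0 ->]]]] [a' [b' [c' [c0' ->]]]].
  have fix1 : forall a b c, c != 0 -> erm true false (PD.evw iota t v a b / E c) = PD.evw iota t v a b / E c.
    move=> a1 b1 cc cc0; rewrite ermE.
    have -> : PD.evw iota t v a1 b1 = ev4 (Quad a1 0 b1 0) by rewrite /ev4 /PD.evw /= ev00; ring.
    rewrite esig_rep //; congr (ev4 _ / _); rewrite /qconj /sg /=; congr Quad; ring.
  by rewrite rmorphD fix1 // rmorphM fix1 // ermE esig_u mulrN.
- by left; exists c1; split => //; rewrite hornerM hornerX.
Qed.

Lemma place_e2 (x2 : k) (Q2 : {poly k}) (c2 : k) :
  Q = Q2 * ('X - x2%:P) -> x2 * Q2.[x2] != 0 -> c2 != 0 -> x2 * P.[x2] = c2 ^+ 2 ->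
  fixes_geometric_point iota (erm false true).
Proof.
move=> HQ Hr c20 Hc2.
have indep : forall a b, E a + E b * u = 0 -> a = 0 /\ b = 0.
  move=> a b H; have : ev4 (Quad a b 0 0) = 0 by rewrite /ev4 /= ev00 !mul0r !addr0 H.
  by case/q0.
apply: proj1.
apply: (@place_any k L iota t u ('X * P) x2 t_transc usq indep v ('X * Q2) (erm false true) two0).
- by rewrite hornerM hornerX.
- rewrite /piw vsq -ev0M HQ; congr E; ring.
- move=> z; case: (rpP z); move: (rp z) => [[a b c d] cc] /= [cc0 ->].
  exists (PD.evw iota t u a b / E cc), (PD.evw iota t u c d / E cc); split.
  + by exists a, b, cc.
  + by exists c, d, cc.
  + rewrite /ev4 /PD.evw /=; field; by rewrite E0.
- move=> al be [a [b [c [c0 ->]]]] [a' [b' [c' [c0' ->]]]] H.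
  have : ev4 (Quad (c' * a) (c' * b) (c * a') (c * b')) = 0.
    transitivity (E c * E c' * (PD.evw iota t u a b / E c + PD.evw iota t u a' b' / E c' * v)).
      rewrite /ev4 /PD.evw /= !ev0M; field; by rewrite !E0.
    by rewrite H mulr0.
  case/q0 => /(mul_eq0 c0') -> /(mul_eq0 c0') -> /(mul_eq0 c0) -> /(mul_eq0 c0) ->.
  by rewrite evw0 !mul0r.
- move=> al be [a [b [c [c0 ->]]]] [a' [b' [c' [c0' ->]]]].
  have fix1 : forall a b c, c != 0 -> erm false true (PD.evw iota t u a b / E c) = PD.evw iota t u a b / E c.
    move=> a1 b1 cc cc0; rewrite ermE.
    have -> : PD.evw iota t u a1 b1 = ev4 (Quad a1 b1 0 0) by rewrite /ev4 /PD.evw /= ev00; ring.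
    rewrite esig_rep //; congr (ev4 _ / _); rewrite /qconj /sg /=; congr Quad; ring.
  by rewrite rmorphD fix1 // rmorphM fix1 // ermE esig_v mulrN.
- by left; exists c2; split => //; rewrite hornerM hornerX.
Qed.

Lemma place_e12 : fixes_geometric_point iota (erm true true).
Proof.
have tE : E 'X = t by rewrite ev0X.
have EX0 : E 'X != 0 by apply: E0; apply: X0.
have EP0 : E P != 0 by apply: E0; apply: Pn0.
set w := u * v / t.
have wsq : w ^+ 2 = E (P * Q).
  rewrite expr2 /w ev0M.
  transitivity ((u * u) * (v * v) / (t * t)); first by field; rewrite t0.
  rewrite hu hv tE; field; by rewrite t0.
have indep : forall a b, E a + E b * w = 0 -> a = 0 /\ b = 0.
  move=> a b H; have : ev4 (Quad ('X * a) 0 0 b) = 0.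
    transitivity (t * (E a + E b * w)); last by rewrite H mulr0.
    rewrite /ev4 /w /= ev00 ev0M tE; field; by rewrite t0.
  by case/q0 => /(mul_eq0 X0) -> _ _ ->.
apply: proj1.
apply: (@place_any k L iota t w (P * Q) 0 t_transc wsq indep u P (erm true true) two0).
- exact: P0.
- by rewrite /piw polyC0 subr0 usq ev0M.
- move=> z; case: (rpP z); move: (rp z) => [[a b c d] cc] /= [cc0 ->].
  exists (PD.evw iota t w a ('X * d) / E cc), (PD.evw iota t w (b * P) c / E (cc * P)); split.
  + by exists a, ('X * d), cc.
  + by exists (b * P), c, (cc * P); split => //; rewrite mulf_neq0 ?Pn0.
  + have Ecc := E0 cc0.
    transitivity (ev4 (Quad a b c d) / E cc + E c * v * (u * u - E 'X * E P) / (E cc * (E 'X * E P))).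
      by rewrite hu subrr mulr0 mul0r addr0.
    rewrite /ev4 /PD.evw /w /= !ev0M tE; field.
    by rewrite Ecc EP0 t0.
- move=> al be [a [b [c [c0 ->]]]] [a' [b' [c' [c0' ->]]]] H.
  have : ev4 (Quad ('X * c' * a) ('X * c * a') ('X * c * P * b') (c' * b)) = 0.
    transitivity (E 'X * E c * E c' * (PD.evw iota t w a b / E c + PD.evw iota t w a' b' / E c' * u)
       - E c * E b' * v * (u * u - E 'X * E P)).
      rewrite /ev4 /PD.evw /w /= !ev0M tE; field; by rewrite !E0 // t0.
    by rewrite H hu !subrr !mulr0 subr0.
  have Xc0 : 'X * c != 0 by rewrite mulf_neq0 ?X0.
  have Xc0' : 'X * c' != 0 by rewrite mulf_neq0 ?X0.
  have XcP : 'X * c * P != 0 by rewrite mulf_neq0 ?Pn0.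
  case/q0 => /(mul_eq0 Xc0') -> /(mul_eq0 Xc0) -> /(mul_eq0 XcP) -> /(mul_eq0 c0') ->.
  by rewrite evw0 !mul0r.
- move=> al be [a [b [c [c0 ->]]]] [a' [b' [c' [c0' ->]]]].
  have fix1 : forall a b c, c != 0 -> erm true true (PD.evw iota t w a b / E c) = PD.evw iota t w a b / E c.
    move=> a1 b1 cc cc0; rewrite ermE.
    have -> : PD.evw iota t w a1 b1 / E cc = ev4 (Quad ('X * a1) 0 0 b1) / E ('X * cc).
      rewrite /ev4 /PD.evw /w /= ev00 !ev0M tE; field; by rewrite t0 E0.
    rewrite esig_rep ?mulf_neq0 ?X0 //; congr (ev4 _ / _); rewrite /qconj /sg /=; congr Quad; ring.
  by rewrite rmorphD fix1 // rmorphM fix1 // ermE esig_u mulrN.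
- have W0 : (P * Q).[0] != 0 by rewrite hornerM mulf_neq0.
  case: (classic (exists c0 : k, c0 ^+ 2 = (P * Q).[0])) => [[c0 Hc0]|Hn].
    left; exists c0; split => //.
    by apply: contraNneq W0 => c00; rewrite -Hc0 c00 expr2 mul0r.
  right => x; apply/eqP => Hx; apply: Hn; by exists x.
Qed.

Lemma fixes_ext (f g : L -> L) : (forall z, f z = g z) ->
  fixes_geometric_point iota f -> fixes_geometric_point iota g.
Proof.
move=> fg [O [H1 H2 H3]]; exists O; split => //.
- by move=> a; rewrite -fg.
- by move=> a Oa; rewrite -fg; apply: H3.
Qed.

Lemma two0L : (2%:R : L) != 0.
Proof. by rewrite -(rmorph_nat iota) fmorph_eq0. Qed.

Lemma u0 : u != 0.
Proof.
apply/eqP => H; have : E ('X * P) != 0 by apply: E0; rewrite mulf_neq0 ?X0 ?Pn0.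
by rewrite -usq H expr2 mul0r eqxx.
Qed.

Lemma v0' : v != 0.
Proof.
apply/eqP => H; have : E ('X * Q) != 0 by apply: E0; rewrite mulf_neq0 ?X0 ?Qn0.
by rewrite -vsq H expr2 mul0r eqxx.
Qed.

Lemma neg_neq (x : L) : x != 0 -> - x != x.
Proof.
move=> x0; apply/eqP => H.
have : (2%:R : L) * x = 0 by rewrite mulr_natl mulr2n -{1}H addNr.
by move/eqP; rewrite mulf_eq0 (negbTE two0L) (negbTE x0).
Qed.

Lemma main_inner (x2 : k) (P1 Q2 : {poly k}) (c1 c2 : k) :
  P = P1 * ('X - x1%:P) -> x1 * P1.[x1] != 0 -> c1 != 0 -> x1 * Q.[x1] = c1 ^+ 2 ->
  Q = Q2 * ('X - x2%:P) -> x2 * Q2.[x2] != 0 -> c2 != 0 -> x2 * P.[x2] = c2 ^+ 2 ->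
  exists e1 e2 : {rmorphism L -> L},
    [/\ [/\ bijective e1, bijective e2
          & (forall c : k, e1 (iota c) = iota c /\ e2 (iota c) = iota c)],
        [/\ e1 t = t, e1 u = - u & e1 v = v],
        [/\ e2 t = t, e2 u = u & e2 v = - v],
        [/\ [/\ e1 \o e1 =1 id, e2 \o e2 =1 id & e1 \o e2 =1 e2 \o e1]
          & [/\ ~ (e1 =1 id), ~ (e2 =1 id) & ~ (e1 \o e2 =1 id)]]
      & [/\ fixes_geometric_point iota id,
            fixes_geometric_point iota e1,
            fixes_geometric_point iota e2
          & fixes_geometric_point iota (e1 \o e2)]].
Proof.
move=> HP Hr1 c10 Hc1 HQ Hr2 c20 Hc2.
have [F1 Fid] := place_e1 HP Hr1 c10 Hc1.
have F2 := place_e2 HQ Hr2 c20 Hc2.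
have F12 := place_e12.
exists (erm true false), (erm false true).
have K s1 s2 z : erm s1 s2 (erm s1 s2 z) = z.
  by rewrite !ermE esigK !addbb esig00.
have C z : erm true false (erm false true z) = erm true true z.
  by rewrite !ermE esigK.
have C' z : erm false true (erm true false z) = erm true true z.
  by rewrite !ermE esigK.
split.
- split.
  + by exists (erm true false) => z; apply: K.
  + by exists (erm false true) => z; apply: K.
  + by move=> c; rewrite !ermE !esig_iota.
- by rewrite !ermE esig_t esig_u esig_v.
- by rewrite !ermE esig_t esig_u esig_v.
- split; first by split => z /=; rewrite ?K // C C'.
  split => H.
  + by move: (H u); rewrite ermE esig_u => /eqP; rewrite (negbTE (neg_neq u0)).
  + by move: (H v); rewrite ermE esig_v => /eqP; rewrite (negbTE (neg_neq v0')).
  + by move: (H u); rewrite /= C ermE esig_u => /eqP; rewrite (negbTE (neg_neq u0)).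
- split => //.
  by apply: fixes_ext F12 => z /=; rewrite C.
Qed.
End Main.

End PF.
Import PF.

Unset Implicit Arguments. Set Strict Implicit.

Theorem proposition8p2
  (k : fieldType) (char0 : [pchar k] =i pred0)
  (P Q : {poly k})
  (sepP : separable_poly P) (sepQ : separable_poly Q)
  (degP : (1 < size P)%N) (degQ : (1 < size Q)%N)
  (copPQ : coprimep P Q)
  (P0 : P.[0] != 0) (Q0 : Q.[0] != 0)
  (x1 : k) (rootP : root P x1) (sq1 : exists c : k, c != 0 /\ x1 * Q.[x1] = c ^+ 2)
  (x2 : k) (rootQ : root Q x2) (sq2 : exists c : k, c != 0 /\ x2 * P.[x2] = c ^+ 2)
  (* L = k(x)(sqrt(x P(x)), sqrt(x Q(x))), given by generators t = x, u, v *)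
  (L : fieldType) (iota : {rmorphism k -> L}) (t u v : L)
  (t_transc : forall p : {poly k}, p != 0 -> (map_poly iota p).[t] != 0)
  (u_sq : u ^+ 2 = t * (map_poly iota P).[t])
  (v_sq : v ^+ 2 = t * (map_poly iota Q).[t])
  (L_gen : forall S : L -> Prop,
      (forall c : k, S (iota c)) -> S t -> S u -> S v ->
      (forall a b, S a -> S b -> S (a - b)) ->
      (forall a b, S a -> S b -> S (a * b)) ->
      (forall a, S a -> S a^-1) ->
      forall a, S a) :
  exists e1 e2 : {rmorphism L -> L},
    [/\ [/\ bijective e1, bijective e2
          & (forall c : k, e1 (iota c) = iota c /\ e2 (iota c) = iota c)],
        [/\ e1 t = t, e1 u = - u & e1 v = v],
        [/\ e2 t = t, e2 u = u & e2 v = - v],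
        (* relations of G = (Z/2Z)^2 and faithfulness of the action *)
        [/\ [/\ e1 \o e1 =1 id, e2 \o e2 =1 id & e1 \o e2 =1 e2 \o e1]
          & [/\ ~ (e1 =1 id), ~ (e2 =1 id) & ~ (e1 \o e2 =1 id)]]
      & (* every element of G fixes a geometric point of X *)
        [/\ fixes_geometric_point iota id,
            fixes_geometric_point iota e1,
            fixes_geometric_point iota e2
          & fixes_geometric_point iota (e1 \o e2)]].
Proof.
have two0 : (2%:R : k) != 0.
  case E2: (2%:R == 0 :> k); last by [].
  have [p Hp] := natf0_pchar (isT : (0 < 2)%N) E2.
  by move: Hp; rewrite char0.
have [P1 HP] := factor_theorem _ _ rootP.
have [Q2 HQ] := factor_theorem _ _ rootQ.
have P1r : P1.[x1] != 0.
  by move: sepP; rewrite HP separable_root => /andP [_].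
have Q2r : Q2.[x2] != 0.
  by move: sepQ; rewrite HQ separable_root => /andP [_].
have x10 : x1 != 0 by apply/eqP => x0; move: rootP; rewrite x0 /root (negbTE P0).
have x20 : x2 != 0 by apply/eqP => x0; move: rootQ; rewrite x0 /root (negbTE Q0).
have Qx1 : Q.[x1] != 0 := coprimep_root copPQ rootP.
have PQx : P * Q = ('X - x1%:P) * (P1 * Q) by rewrite HP; ring.
have R1x : (P1 * Q).[x1] != 0 by rewrite hornerM mulf_neq0.
have usq : u ^+ 2 = ev0 iota t ('X * P) by rewrite ev0M ev0X.
have vsq : v ^+ 2 = ev0 iota t ('X * Q) by rewrite ev0M ev0X.
have [c1 [c10 Hc1]] := sq1.
have [c2 [c20 Hc2]] := sq2.
exact: (@main_inner k P Q (P1 * Q) x1 L iota t u v two0 P0 Q0 PQx R1x t_transc usq vsq L_gen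
  x2 P1 Q2 c1 c2 HP (mulf_neq0 x10 P1r) c10 Hc1 HQ (mulf_neq0 x20 Q2r) c20 Hc2).
Qed.
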